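(* Let $\Delta$ be a quasi-forest of dimension $d-1$ with $s+1$ facets and $f$-vector $(f_0,\ldots,f_{d-1})$, and put $f_{-1}=1$. Then there exist an integer $t$ with $0\le t\le s$ and sequences of integers $(\delta_1,\ldots,\delta_t,\delta_{t+1})$ and $(e_1,\ldots,e_t)$ with $\delta_i\neq e_j$ for all $i,j$, such that $0<\delta_1\le\cdots\le\delta_t\le\delta_{t+1}=d$, $0\le e_1\le\cdots\le e_t<d$, $e_j<\delta_j$ for $1\le j\le t$, and $$\sum_{i=0}^{d} f_{i-1}x^i=\sum_{j=1}^{t+1}(1+x)^{\delta_j}-\sum_{j=1}^{t}(1+x)^{e_j}.$$
   Context: A simplicial complex $\Delta$ on $[n]$ is a collection of subsets of $[n]$ containing all singletons and closed under taking subsets; $\dim\Delta=d-1$ where $d$ is the maximal face size; facets are maximal faces; $f_i$ is the number of faces with $i+1$ elements. For facets $F_{i_1},\ldots,F_{i_q}$, $\langle F_{i_1},\ldots,F_{i_q}\rangle$ is the subcomplex of all faces contained in some $F_{i_j}$. A facet $F$ is a leaf if there is another facet $G\neq F$ with $H\cap F\subset G\cap F$ for all facets $H\neq F$. A quasi-forest is a simplicial complex whose facets admit an ordering $H_1,\ldots,H_m$ such that for each $1<j\le m$, $H_j$ is a leaf of $\langle H_1,\ldots,H_j\rangle$. *)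

(* Defs.v *)
From HB Require Import structures.
From mathcomp Require Import all_boot all_order all_algebra.
Set Implicit Arguments. Unset Strict Implicit. Unset Printing Implicit Defensive.
Import GRing.Theory.

Definition simplicial_complex (n : nat) (D : {set {set 'I_n}}) : Prop :=
  (forall i : 'I_n, [set i] \in D) /\
  (forall F G : {set 'I_n}, F \in D -> G \subset F -> G \in D).

(* d = maximal face size (dim = d - 1). *)
Definition dsize (n : nat) (D : {set {set 'I_n}}) : nat := \max_(F in D) #|F|.

Definition facets (n : nat) (D : {set {set 'I_n}}) : {set {set 'I_n}} :=
  [set F in D | [forall G in D, (F \subset G) ==> (G == F)]].

(* f_{i-1} = number of faces with i elements *)
Definition fnum (n : nat) (D : {set {set 'I_n}}) (i : nat) : nat :=
  #|[set F in D | #|F| == i]|.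

Definition gen (n : nat) (S : {set {set 'I_n}}) : {set {set 'I_n}} :=
  [set F : {set 'I_n} | [exists G in S, F \subset G]].

Definition is_leaf (n : nat) (D : {set {set 'I_n}}) (F : {set 'I_n}) : Prop :=
  F \in facets D /\
  exists2 G, G \in facets D /\ G != F &
    forall H, H \in facets D -> H != F -> H :&: F \subset G :&: F.

(* quasi-forest: an ordering H_1..H_m of the facets such that H_j is a leaf
   of <H_1,...,H_j> for 1 < j <= m  (0-indexed: j = 1 .. m-1). *)
Definition quasi_forest (n : nat) (D : {set {set 'I_n}}) : Prop :=
  exists hs : seq {set 'I_n},
    [/\ uniq hs, [set x in hs] = facets D &
        forall j, 0 < j < size hs ->
          is_leaf (gen [set x in take j.+1 hs]) (nth set0 hs j)].

(* Main.v *)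
Require Import Defs.
From mathcomp Require Import all_boot all_order all_algebra.
From mathcomp Require Import zify ring.
Import GRing.Theory.

Fixpoint mdiff (A B : seq nat) : seq nat :=
  match B with [::] => A | b :: B' => mdiff (rem b A) B' end.

Lemma count_mdiff y A B : count_mem y (mdiff A B) = count_mem y A - count_mem y B.
Proof.
elim: B A => [|b B IH] A /=; first by rewrite subn0.
rewrite IH count_mem_rem /=; lia.
Qed.

Lemma size_mdiff A B : size (mdiff A B) <= size A.
Proof.
elim: B A => [|b B IH] A /=; first by [].
apply: leq_trans (IH (rem b A)) _.
have [H|H] := boolP (b \in A); first by rewrite size_rem // leq_pred.
by rewrite rem_id.
Qed.

Lemma memE (s : seq nat) x : (x \in s) = (0 < count_mem x s).
Proof. by rewrite -has_pred1 has_count. Qed.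

Lemma perm_of_count (s1 s2 : seq nat) :
  (forall x, count_mem x s1 = count_mem x s2) -> perm_eq s1 s2.
Proof. by move=> H; apply/allP => x _ /=; rewrite H. Qed.

Lemma snth (s : seq nat) i j : sorted leq s -> i <= j -> j < size s -> nth 0 s i <= nth 0 s j.
Proof.
move=> Hs Hij Hj; apply: (sorted_leq_nth leq_trans leqnn 0 Hs) => //; rewrite inE /=; lia.
Qed.

Lemma sorted_count_le (s : seq nat) k : sorted leq s -> k < size s ->
  k.+1 <= count (fun y => y <= nth 0 s k) s.
Proof.
move=> Hs Hk; set y := nth 0 s k; rewrite -(cat_take_drop k.+1 s) count_cat.
have Hsz : size (take k.+1 s) = k.+1 by rewrite size_takel.
have : all (fun z => z <= y) (take k.+1 s).
  apply/(all_nthP 0) => i; rewrite Hsz => Hi.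
  rewrite nth_take //; apply: snth => //; lia.
rewrite all_count Hsz => /eqP ->; exact: leq_addr.
Qed.

Lemma sorted_count_lt (s : seq nat) k x : sorted leq s -> k < size s ->
  x <= nth 0 s k -> count (fun y => y < x) s <= k.
Proof.
move=> Hs Hk Hx; rewrite -[in count _ s](cat_take_drop k s) count_cat.
have -> : count (fun y => y < x) (drop k s) = 0.
  apply/eqP; rewrite -leqn0 leqNgt -has_count; apply/negP => /(has_nthP 0) [i].
  rewrite size_drop nth_drop => Hi Hlt.
  have : nth 0 s k <= nth 0 s (k + i).
    apply: snth => //; lia.
  lia.
rewrite addn0; apply: leq_trans (count_size _ _) _; rewrite size_takel //; lia.
Qed.

Lemma comb_core (sa sb : seq nat) (M : nat) :
  sorted leq sa -> sorted leq sb -> size sa = (size sb).+1 ->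
  M \in sa -> all (fun x => x <= M) sa -> all (fun x => x < M) sb ->
  (forall x, x < M -> count (fun y => y <= x) sa <= count (fun y => y < x) sb) ->
  nth 0 sa (size sb) = M /\ (forall j, j < size sb -> nth 0 sb j < nth 0 sa j).
Proof.
move=> ssa ssb Hsz HM HaM HbM Hc; split.
  apply/eqP; rewrite eqn_leq; apply/andP; split.
    by apply: (allP HaM); apply: mem_nth; rewrite Hsz.
  rewrite -{1}(nth_index 0 HM); apply: snth => //; last by rewrite Hsz.
  by rewrite -ltnS -Hsz index_mem.
move=> j Hj; rewrite ltnNge; apply/negP => Hge.
have xM : nth 0 sa j <= M by apply: (allP HaM); apply: mem_nth; rewrite Hsz ltnS ltnW.
have yM : nth 0 sb j < M by apply: (allP HbM); apply: mem_nth.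
have xltM : nth 0 sa j < M by apply: leq_ltn_trans Hge yM.
have h1 : j.+1 <= count (fun y => y <= nth 0 sa j) sa.
  by apply: sorted_count_le; rewrite // Hsz ltnS ltnW.
have h2 : count (fun y => y < nth 0 sa j) sb <= j by apply: sorted_count_lt.
have h3 := Hc _ xltM.
move: h1 h2 h3; move: (count _ sa) (count _ sb) => a b; clear; lia.
Qed.


Lemma facet_inD n (D : {set {set 'I_n}}) F : F \in facets D -> F \in D.
Proof. by rewrite inE => /andP[]. Qed.

Lemma facet_max n (D : {set {set 'I_n}}) F G :
  F \in facets D -> G \in D -> F \subset G -> G = F.
Proof.
rewrite inE => /andP[_ /forallP H] HG HFG.
by move: (H G); rewrite HG HFG /= => /eqP.
Qed.

Arguments facet_inD {n D F}.
Arguments facet_max {n D F G}.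

Lemma memKP n (hs : seq {set 'I_n}) k (F : {set 'I_n}) :
  reflect (exists2 G, G \in take k hs & F \subset G) (F \in gen [set x in take k hs]).
Proof.
rewrite inE; apply: (iffP existsP) => [[G /andP[]]|[G HG HFG]].
  by rewrite inE => HG HFG; exists G.
by exists G; rewrite inE HG.
Qed.

Lemma bigmax_mem (s : seq nat) : s != [::] -> \max_(x <- s) x \in s.
Proof.
elim: s => // x s IH _; rewrite big_cons.
case: s IH => [|y s'] IH; first by rewrite big_nil maxn0 mem_head.
rewrite /maxn; case: ifP => _; last by rewrite mem_head.
by rewrite in_cons IH ?orbT.
Qed.

Lemma binpoly (a d : nat) : (a <= d)%N ->
  (\sum_(0 <= i < d.+1) ('C(a, i))%:R *: 'X^i = (1 + 'X) ^+ a :> {poly int})%R.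
Proof.
move=> had; rewrite addrC exprD1n big_mkord.
rewrite (big_ord_widen_cond d.+1 xpredT (fun i => 'X^i *+ 'C(a, i))%R) ?ltnS //.
rewrite [RHS]big_mkcond /=; apply: eq_bigr => i _; rewrite scaler_nat.
by case: ifP => // /negbT; rewrite -leqNgt => /bin_small ->.
Qed.

Local Open Scope ring_scope.

Lemma comb (A B : seq nat) (M : nat) :
  size A = (size B).+1 ->
  M \in A -> all (fun x => x <= M)%N A -> all (fun x => x < M)%N B ->
  all (fun x => 0 < x)%N A ->
  (forall x, (x < M)%N -> (count (fun y => y <= x)%N A <= count (fun y => y < x)%N B)%N) ->
  exists (t : nat) (delta e : nat -> nat),
    (t <= size B)%N /\
    (forall i j, (1 <= i <= t.+1)%N -> (1 <= j <= t)%N -> delta i <> e j) /\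
    (0 < delta 1)%N /\ delta t.+1 = M /\
    (forall j, (1 <= j <= t)%N -> (delta j <= delta j.+1)%N) /\
    (forall j, (1 <= j < t)%N -> (e j <= e j.+1)%N) /\
    (forall j, (1 <= j <= t)%N -> (e j < M)%N) /\
    (forall j, (1 <= j <= t)%N -> (e j < delta j)%N) /\
    \sum_(1 <= j < t.+2) (1 + 'X) ^+ delta j - \sum_(1 <= j < t.+1) (1 + 'X) ^+ e j
       = \sum_(x <- A) (1 + 'X) ^+ x - \sum_(x <- B) (1 + 'X) ^+ x :> {poly int}.
Proof.
move=> HsA HMA HAM HBM HApos Hcnt.
set A' := mdiff A B; set B' := mdiff B A; set C := mdiff A A'.
have cA' y : count_mem y A' = (count_mem y A - count_mem y B)%N by rewrite count_mdiff.
have cB' y : count_mem y B' = (count_mem y B - count_mem y A)%N by rewrite count_mdiff.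
have cC y : count_mem y C = (count_mem y A - (count_mem y A - count_mem y B))%N.
  by rewrite /C count_mdiff cA'.
have pA : perm_eq A (A' ++ C).
  apply: perm_of_count => y; rewrite count_cat cA' cC.
  move: (count_mem y A) (count_mem y B) => a b; clear; lia.
have pB : perm_eq B (B' ++ C).
  apply: perm_of_count => y; rewrite count_cat cB' cC.
  move: (count_mem y A) (count_mem y B) => a b; clear; lia.
have sz : size A' = (size B').+1.
  move: (perm_size pA) (perm_size pB); rewrite !size_cat HsA.
  move: (size A') (size B') (size C) (size B) => x y z w; clear; lia.
have szB : (size B' <= size B)%N := size_mdiff B A.
have MA' : M \in A'.
  rewrite memE cA'.
  have -> : count_mem M B = 0%N.
    apply/eqP; rewrite -leqn0 leqNgt -memE; apply/negP => /(allP HBM); by rewrite ltnn.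
  by rewrite subn0 -memE.
have memA' x : x \in A' -> (count_mem x B < count_mem x A)%N.
  by rewrite memE cA' subn_gt0.
have memB' x : x \in B' -> (count_mem x A < count_mem x B)%N.
  by rewrite memE cB' subn_gt0.
have inA x : (count_mem x B < count_mem x A)%N -> x \in A.
  by rewrite memE => h; apply: leq_ltn_trans (leq0n _) h.
have inB x : (count_mem x A < count_mem x B)%N -> x \in B.
  by rewrite memE => h; apply: leq_ltn_trans (leq0n _) h.
have Hc' x : (x < M)%N -> (count (fun y => y <= x)%N A' <= count (fun y => y < x)%N B')%N.
  move=> Hx; have := Hcnt x Hx; rewrite (permP pA) (permP pB) !count_cat.
  have : (count (fun y => y < x)%N C <= count (fun y => y <= x)%N C)%N.
    by apply: sub_count => y /= /ltnW.
  move: (count _ A') (count _ B') (count (fun y => y < x)%N C) (count (fun y => y <= x)%N C).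
  by move=> a b c1 c2; clear; lia.
clearbody C A' B'.
pose sa := sort leq A'; pose sb := sort leq B'.
have psa : perm_eq sa A' by rewrite /sa perm_sort.
have psb : perm_eq sb B' by rewrite /sb perm_sort.
have ssa : sorted leq sa := sort_sorted leq_total A'.
have ssb : sorted leq sb := sort_sorted leq_total B'.
have Hsa : size sa = (size B').+1 by rewrite size_sort.
have Hsb : size sb = size B' by rewrite size_sort.
have msa x : (x \in sa) = (x \in A') by rewrite mem_sort.
have msb x : (x \in sb) = (x \in B') by rewrite mem_sort.
clearbody sa sb.
have saM x : x \in sa -> (x <= M)%N by rewrite msa => /memA' /inA; apply: (allP HAM).
have sbM x : x \in sb -> (x < M)%N by rewrite msb => /memB' /inB; apply: (allP HBM).
have [core1 core2] : nth 0%N sa (size sb) = M /\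
    (forall j, (j < size sb)%N -> (nth 0%N sb j < nth 0%N sa j)%N).
  apply: comb_core => //.
  - by rewrite Hsa Hsb.
  - by rewrite msa.
  - by apply/allP.
  - by apply/allP.
  - by move=> x Hx; rewrite (permP psa) (permP psb); apply: Hc'.
rewrite Hsb in core1 core2.
exists (size B'), (fun j => nth 0%N sa j.-1), (fun j => nth 0%N sb j.-1).
split; first exact: szB.
split.
  move=> i j /andP [Hi1 Hi2] /andP [Hj1 Hj2] Heq.
  have h1 : nth 0%N sa i.-1 \in sa by apply: mem_nth; rewrite Hsa prednK.
  have h2 : nth 0%N sb j.-1 \in sb.
    by apply: mem_nth; rewrite Hsb -ltnS prednK.
  move: h1 h2; rewrite msa msb Heq => /memA' h1 /memB' h2.
  by move: h1 h2; move: (count_mem _ A) (count_mem _ B) => a b; clear; lia.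
split.
  have h : nth 0%N sa 0 \in sa by apply: mem_nth; rewrite Hsa.
  by apply: (allP HApos); apply: inA; apply: memA'; rewrite -msa.
split; first by [].
split.
  move=> j /andP [Hj1 Hj2] /=; apply: snth => //.
    by rewrite leq_pred.
  by rewrite Hsa ltnS.
split.
  move=> j /andP [Hj1 Hj2] /=; apply: snth => //.
    by rewrite leq_pred.
  by rewrite Hsb.
split.
  move=> j /andP [Hj1 Hj2] /=; apply: sbM; apply: mem_nth.
  by rewrite Hsb -ltnS prednK.
split.
  move=> j /andP [Hj1 Hj2] /=; apply: core2.
  by rewrite -ltnS prednK.
have E1 : \sum_(x <- sa) (1 + 'X) ^+ x = \sum_(1 <= j < (size B').+2) (1 + 'X) ^+ nth 0%N sa j.-1 :> {poly int}.
  by rewrite (big_nth 0%N) Hsa big_add1.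
have E2 : \sum_(x <- sb) (1 + 'X) ^+ x = \sum_(1 <= j < (size B').+1) (1 + 'X) ^+ nth 0%N sb j.-1 :> {poly int}.
  by rewrite (big_nth 0%N) Hsb big_add1.
rewrite -E1 -E2 (perm_big _ psa) (perm_big _ psb) (perm_big _ pA) (perm_big _ pB) !big_cat /=.
by rewrite opprD addrACA subrr addr0.
Qed.

Theorem lemma2p2 (n : nat) (D : {set {set 'I_n}}) (s : nat) :
  (0 < n)%N ->
  simplicial_complex D ->
  quasi_forest D ->
  #|facets D| = s.+1 ->
  let d := dsize D in
  exists (t : nat) (delta e : nat -> nat),
    (t <= s)%N /\
        (forall i j, (1 <= i <= t.+1)%N -> (1 <= j <= t)%N -> delta i <> e j) /\
        (0 < delta 1)%N /\ delta t.+1 = d /\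
        (forall j, (1 <= j <= t)%N -> (delta j <= delta j.+1)%N) /\
        (forall j, (1 <= j < t)%N -> (e j <= e j.+1)%N) /\
        (forall j, (1 <= j <= t)%N -> (e j < d)%N) /\
        (forall j, (1 <= j <= t)%N -> (e j < delta j)%N) /\
        \sum_(0 <= i < d.+1) (fnum D i)%:R *: 'X^i
          = \sum_(1 <= j < t.+2) (1 + 'X) ^+ delta j
            - \sum_(1 <= j < t.+1) (1 + 'X) ^+ e j :> {poly int}.
Proof.
move=> n0 [Hsing Hclos] [hs [Huniq Hset Hleaf]] Hcard d.
have memhs F : (F \in hs) = (F \in facets D) by rewrite -Hset inE.
have Hm : size hs = s.+1.
  by rewrite -Hcard -Hset cardsE; apply/esym/card_uniqP.
pose K k := gen [set x in take k hs].
have takeD k G : G \in take k hs -> G \in facets D.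
  by move=> /mem_take; rewrite memhs.
have KD k F : F \in K k -> F \in D.
  move=> /memKP [G /takeD /facet_inD HG HFG]; exact: Hclos HG HFG.
have hsK k h : h \in take k hs -> h \in facets (K k).
  move=> Hh; rewrite inE; apply/andP; split.
    by apply/memKP; exists h.
  apply/forallP => H; apply/implyP => /memKP [h' Hh' HHh']; apply/implyP => HhH.
  have e1 : h' = h := facet_max (takeD _ _ Hh) (facet_inD (takeD _ _ Hh')) (subset_trans HhH HHh').
  by rewrite eqEsubset HhH andbT -e1.
have Kfacet k G : G \in facets (K k) -> G \in take k hs.
  move=> HG; have := HG; rewrite inE => /andP [/memKP [h Hh HGh] /forallP Hmax].
  have := Hmax h; rewrite (facet_inD (hsK _ _ Hh)) HGh /= => /eqP <-; exact: Hh.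
have dge F : F \in D -> (#|F| <= d)%N.
  by move=> HF; rewrite /d /dsize; apply: leq_bigmax_cond.
have Kstep j i : (j < size hs)%N ->
    [set F : {set 'I_n} in K j.+1 | #|F| == i] =
    [set F : {set 'I_n} in K j | #|F| == i] :|: [set F : {set 'I_n} | F \subset nth set0 hs j & #|F| == i].
  move=> Hj; apply/setP => F.
  have E : (F \in K j.+1) = (F \in K j) || (F \subset nth set0 hs j).
    apply/memKP/orP => [[G]|].
      rewrite (take_nth set0 Hj) mem_rcons in_cons => /orP [/eqP -> | HG] HFG.
        by right.
      by left; apply/memKP; exists G.
    case => [/memKP [G HG HFG]|HF].
      by exists G => //; rewrite (take_nth set0 Hj) mem_rcons in_cons HG orbT.
    by exists (nth set0 hs j) => //; rewrite (take_nth set0 Hj) mem_rcons mem_head.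
  by move: E; rewrite !inE => ->; exact: andb_orl.
have K0 (F : {set 'I_n}) : (F \in K 0) = false.
  by apply/memKP => -[G]; rewrite take0.
have notin j : (j < size hs)%N -> nth set0 hs j \notin take j hs.
  move=> Hj; have U := Huniq.
  rewrite -(cat_take_drop j.+1 hs) cat_uniq (take_nth set0 Hj) rcons_uniq in U.
  by case/and3P: U => /andP [].
pose A k := map (fun F : {set 'I_n} => #|F|) (take k hs).
pose M k := \max_(x <- A k) x.
pose P k := \sum_(0 <= i < d.+1) (fnum (K k) i)%:R *: 'X^i : {poly int}.
have IND k : (0 < k <= size hs)%N -> exists B : seq nat,
    [/\ size B = k.-1, all (fun x => x < M k)%N B,
        (forall x, (x < M k)%N ->
           (count (fun y => y <= x)%N (A k) <= count (fun y => y < x)%N B)%N) &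
        P k = \sum_(x <- A k) (1 + 'X) ^+ x - \sum_(x <- B) (1 + 'X) ^+ x].
  elim: k => [//|k IH] /andP [_ Hk].
  have fcard0 (X : {set 'I_n}) i : #|[set F : {set 'I_n} | F \subset X & #|F| == i]| = 'C(#|X|, i).
    exact: cards_draws.
  case: k IH Hk => [|k] IH Hk.
    exists [::].
    have A1 : A 1%N = [:: #|nth set0 hs 0|] by rewrite /A (take_nth set0 Hk) take0.
    have M1 : M 1%N = #|nth set0 hs 0| by rewrite /M A1 big_seq1.
    split => //; rewrite ?M1 ?A1.
      by move=> x Hx /=; rewrite [(_ <= x)%N]leqNgt Hx.
    rewrite big_seq1 big_nil subr0 /P -(binpoly _ _ (dge _ (facet_inD (takeD 1%N _ _)))); last first.
      by rewrite (take_nth set0 Hk) take0 mem_head.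
    apply: eq_bigr => i _; congr (_%:R *: _).
    rewrite /fnum Kstep //.
    have -> : [set F : {set 'I_n} in K 0 | #|F| == i] = set0.
      by apply/setP => F; rewrite in_set K0 in_set0.
    by rewrite set0U fcard0.
  have Hj : (k.+1 < size hs)%N by [].
  have [B [szB BM Bcnt PB]] := IH (ltnW Hj).
  have [_ [G [GF GNE] GL]] := Hleaf k.+1 ltac:(by rewrite Hj).
  set h := nth set0 hs k.+1 in GNE GL.
  have Gt : G \in take k.+1 hs.
    have := Kfacet _ _ GF; rewrite (take_nth set0 Hj) mem_rcons in_cons.
    by case/orP => // /eqP GE; rewrite GE eqxx in GNE.
  have hf : h \in facets D by rewrite -memhs mem_nth.
  have Gf : G \in facets D := takeD _ _ Gt.
  have bh : (#|G :&: h| < #|h|)%N.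
    rewrite ltn_neqAle subset_leq_card ?subsetIr // andbT.
    apply/negP => /eqP E.
    have : G :&: h == h by rewrite eqEcard subsetIr E leqnn.
    move=> /eqP E2; have hG : h \subset G by rewrite -E2 subsetIl.
    by move: GNE; rewrite (facet_max hf (facet_inD Gf) hG) eqxx.
  have bG : (#|G :&: h| < #|G|)%N.
    rewrite ltn_neqAle subset_leq_card ?subsetIl // andbT.
    apply/negP => /eqP E.
    have : G :&: h == G by rewrite eqEcard subsetIl E leqnn.
    move=> /eqP E2; have Gh : G \subset h by rewrite -E2 subsetIr.
    by move: GNE; rewrite -(facet_max Gf (facet_inD hf) Gh) eqxx.
  have Kint i : [set F : {set 'I_n} in K k.+1 | #|F| == i] :&:
                [set F : {set 'I_n} | F \subset h & #|F| == i] =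
                [set F : {set 'I_n} | F \subset G :&: h & #|F| == i].
    apply/setP => F; apply/setIP/idP.
      case => /setIdP [/memKP [h' Hh' Fh'] Fi]; rewrite !inE => /andP [Fh _].
      rewrite Fi andbT subsetI Fh andbT.
      have h'ne : h' != h by apply/eqP => E; move: (notin _ Hj); rewrite -/h -E Hh'.
      have h'f : h' \in facets (K k.+2).
        apply: hsK; rewrite (take_nth set0 Hj) mem_rcons in_cons Hh' orbT //.
      have := GL h' h'f h'ne; rewrite subsetI => /andP [+ _].
      by apply: subset_trans; rewrite subsetI Fh' Fh.
    move=> HF; rewrite !inE subsetI in HF; case/andP: HF => /andP [FG Fh] Fi; split.
      by apply/setIdP; split => //; apply/memKP; exists G.
    by rewrite !inE Fh Fi.
  have fstep i : (fnum (K k.+2) i + 'C(#|G :&: h|, i) = fnum (K k.+1) i + 'C(#|h|, i))%N.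
    by rewrite /fnum Kstep // -!fcard0 -Kint; exact: cardsUI.
  have Pstep : P k.+2 + (1 + 'X) ^+ #|G :&: h| = P k.+1 + (1 + 'X) ^+ #|h|.
    have hd : (#|h| <= d)%N by apply: dge; apply: facet_inD.
    have bd : (#|G :&: h| <= d)%N by apply: leq_trans hd; apply: ltnW.
    rewrite -(binpoly _ _ hd) -(binpoly _ _ bd) /P -!big_split /=.
    by apply: eq_bigr => i _; rewrite -!scalerDl -!natrD fstep.
  have HA : A k.+2 = rcons (A k.+1) #|h| by rewrite /A (take_nth set0 Hj) map_rcons.
  have HM : M k.+2 = maxn (M k.+1) #|h| by rewrite /M HA big_rcons.
  have szA : size (A k.+1) = k.+1 by rewrite size_map size_takel // ltnW.
  have AM : all (fun x => x <= M k.+1)%N (A k.+1).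
    by apply/allP => x Hx; apply: leq_bigmax_seq.
  have GM : (#|G| <= M k.+1)%N by apply: leq_bigmax_seq => //; apply: map_f.
  exists (rcons B #|G :&: h|); split.
  - by rewrite size_rcons szB.
  - rewrite HM; apply/allP => x; rewrite mem_rcons in_cons => /orP [/eqP -> | Hx].
      by apply: leq_trans (leq_maxl _ _); apply: leq_trans GM.
    by apply: leq_trans (leq_maxl _ _); apply: (allP BM).
  - move=> x; rewrite HM HA -!cats1 !count_cat /=.
    case: (ltnP x (M k.+1)) => HxM Hx.
      have := Bcnt x HxM; case: (leqP #|h| x) => ha h1.
        have hb : (#|G :&: h| < x)%N by apply: leq_trans bh ha.
        by rewrite hb !addn0 !addn1 ltnS.
      by rewrite !addn0; apply: leq_trans h1 (leq_addr _ _).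
    have hax : (x < #|h|)%N by move: Hx; rewrite leq_max => /orP [h2|//]; rewrite ltnNge HxM in h2.
    rewrite [(#|h| <= x)%N]leqNgt hax /= !addn0.
    have e1 : count (fun y => y <= x)%N (A k.+1) = size (A k.+1).
      apply/eqP; rewrite -all_count; apply/allP => y Hy.
      by apply: leq_trans HxM; apply: (allP AM).
    have e2 : count (fun y => y < x)%N B = size B.
      apply/eqP; rewrite -all_count; apply/allP => y Hy.
      by apply: leq_trans HxM; apply: (allP BM).
    have hb : (#|G :&: h| < x)%N by apply: leq_trans HxM; apply: leq_trans GM.
    by rewrite e1 e2 szA szB hb /= addn1.
  - rewrite -[P k.+2](addrK ((1 + 'X) ^+ #|G :&: h|)) Pstep PB HA -!cats1 !big_cat /= !big_seq1.
    ring.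
have KmD : K (size hs) = D.
  apply/setP => F; apply/idP/idP; first exact: KD.
  move=> HF.
  case: (@arg_maxnP _ F (fun G => (G \in D) && (F \subset G)) (fun G => #|G|)).
    by rewrite HF subxx.
  move=> G /andP [GD FG] Gmax.
  have Gf : G \in facets D.
    rewrite inE GD; apply/forallP => H; apply/implyP => HD; apply/implyP => GH.
    have := Gmax H; rewrite HD (subset_trans FG GH) => /(_ isT) HHG.
    by rewrite eq_sym eqEcard GH; exact: HHG.
  by apply/memKP; exists G; rewrite ?take_size ?memhs.
have [B [szB BM Bcnt PB]] := IND (size hs) ltac:(by rewrite Hm leqnn).
have Am : A (size hs) = map (fun F : {set 'I_n} => #|F|) hs by rewrite /A take_size.
rewrite Am in BM Bcnt PB; rewrite /M Am in BM Bcnt.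
rewrite /P KmD in PB.
set AA := map (fun F : {set 'I_n} => #|F|) hs in BM Bcnt PB.
have szA : size AA = s.+1 by rewrite size_map.
have AAne : AA != [::] by rewrite -size_eq0 szA.
have MA := bigmax_mem AA AAne.
have AM : all (fun x => x <= \max_(x <- AA) x)%N AA.
  by apply/allP => x Hx; apply: leq_bigmax_seq.
have Apos : all (fun x => 0 < x)%N AA.
  apply/allP => x /mapP [h Hh ->]; rewrite card_gt0; apply/negP => /eqP h0.
  have Hi := Hsing (Ordinal n0).
  have hf : h \in facets D by rewrite -memhs.
  have hs0 : h \subset [set Ordinal n0] by rewrite h0 sub0set.
  have e := facet_max hf Hi hs0.
  by move: e; rewrite h0 => /eqP; rewrite -cards_eq0 cards1.
have dM : d = \max_(x <- AA) x.
  apply/eqP; rewrite eqn_leq; apply/andP; split.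
    rewrite /d /dsize; apply/bigmax_leqP => F HF.
    rewrite -KmD in HF; case/memKP: HF => h Hh HFh; rewrite take_size in Hh.
    apply: leq_trans (subset_leq_card HFh) _; apply: leq_bigmax_seq => //.
    exact: map_f.
  case/mapP: MA => h Hh ->; apply: dge; apply: facet_inD; rewrite -memhs //.
have := comb AA B (\max_(x <- AA) x).
have szAB : size AA = (size B).+1 by rewrite szA szB Hm.
move=> /(_ szAB MA AM BM Apos Bcnt); rewrite -dM szB Hm /=.
move=> [t [delta [e [H1 [H2 [H3 [H4 [H5 [H6 [H7 [H8 H9]]]]]]]]]]].
exists t, delta, e; do 8 (split => //).
by rewrite PB H9.
Qed.
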